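(* The set of non-zero normal elements of $A$ (elements $u\neq0$ with $uA=Au$) is exactly $\{\lambda x^i:\lambda\in\Bbbk^\times,\ i\geq0\}$.
   Context: Let $\Bbbk$ be a field of characteristic zero and $N\geq1$ an integer. Let $A=A_N$ be the $\Bbbk$-algebra generated by $x,y$ subject to the relation $yx-xy=x^N$. *)

(* Defs.v *)
From HB Require Import structures.
From mathcomp Require Import all_boot all_order all_algebra.
Set Implicit Arguments. Unset Strict Implicit. Unset Printing Implicit Defensive.
Import GRing.Theory.
Local Open Scope ring_scope.

Definition AN_rel (F : fieldType) (N : nat) (B : algType F) (a b : B) : Prop :=
  b * a - a * b = a ^+ N.

(* (A, x, y) is "the F-algebra generated by x, y subject to yx - xy = x^N",
   characterised by its universal property: x, y satisfy the relation, and
   for every F-algebra B with elements a, b satisfying the relation there is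
   a unique F-algebra morphism A -> B sending x to a and y to b. *)
Definition is_AN (F : fieldType) (N : nat) (A : algType F) (x y : A) : Prop :=
  AN_rel N x y /\
  forall (B : algType F) (a b : B), AN_rel N a b ->
    (exists f : {lrmorphism A -> B}, f x = a /\ f y = b) /\
    (forall f g : {lrmorphism A -> B}, f x = g x -> f y = g y -> f =1 g).

Definition normal_elt (R : nzRingType) (u : R) : Prop :=
  (forall a : R, exists b : R, u * a = b * u) /\
  (forall a : R, exists b : R, a * u = u * b).

(* Main.v *)
Require Import Defs.
From HB Require Import structures.
From mathcomp Require Import all_boot all_order all_algebra.
From mathcomp Require Import boolp.
From mathcomp Require Import zify.
Set Implicit Arguments. Unset Strict Implicit. Unset Printing Implicit Defensive.
Import GRing.Theory.
Local Open Scope ring_scope.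

Section EndS.
Variables (F : fieldType) (A : algType F).

Record subsp := Subsp { sp :> A -> Prop ; sp0 : sp 0 ; sp1 : sp 1 ;
  spD : forall u v, sp u -> sp v -> sp (u + v) ;
  spZ : forall (c : F) u, sp u -> sp (c *: u) }.

Record endS (W : subsp) := EndS { efn :> A -> A ;
  efnL : forall (c : F) u v, efn (c *: u + v) = c *: efn u + efn v ;
  efnW : forall u, W u -> W (efn u) }.

Variable W : subsp.

Lemma endS_ext (f g : endS W) : efn f =1 efn g -> f = g.
Proof.
case: f g => f fL fW [g gL gW] /= /funext efg; subst g.
by rewrite (Prop_irrelevance fL gL) (Prop_irrelevance fW gW).
Qed.

HB.instance Definition _ := gen_eqMixin (endS W).
HB.instance Definition _ := gen_choiceMixin (endS W).

Lemma spN u : W u -> W (- u).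
Proof. by move=> Wu; rewrite -scaleN1r; apply: spZ. Qed.

Program Definition e0 : endS W := @EndS W (fun _ => 0) _ _.
Next Obligation. by rewrite scaler0 addr0. Qed.
Next Obligation. exact: sp0. Qed.
Program Definition eopp (f : endS W) : endS W := @EndS W (fun v => - f v) _ _.
Next Obligation. by rewrite efnL opprD scalerN. Qed.
Next Obligation. by apply: spN; apply: efnW. Qed.
Program Definition eadd (f g : endS W) : endS W := @EndS W (fun v => f v + g v) _ _.
Next Obligation. by rewrite !efnL scalerDr addrACA. Qed.
Next Obligation. by apply: spD; apply: efnW. Qed.
Program Definition ecomp (f g : endS W) : endS W := @EndS W (fun v => f (g v)) _ _.
Next Obligation. by rewrite !efnL. Qed.
Next Obligation. by do 2 apply: efnW. Qed.
Program Definition eid : endS W := @EndS W (fun v => v) _ _.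
Program Definition escale (c : F) (f : endS W) : endS W := @EndS W (fun v => c *: f v) _ _.
Next Obligation. by rewrite efnL scalerDr !scalerA mulrC. Qed.
Next Obligation. by apply: spZ; apply: efnW. Qed.

Lemma efnD (f : endS W) u v : f (u + v) = f u + f v.
Proof. by have := efnL f 1 u v; rewrite !scale1r. Qed.
Lemma efn0 (f : endS W) : f 0 = 0.
Proof. by apply: (addIr (f 0)); rewrite -efnD addr0 add0r. Qed.
Lemma efnZ (f : endS W) c u : f (c *: u) = c *: f u.
Proof. by rewrite -[c *: u]addr0 efnL efn0 addr0. Qed.

Lemma eaddA : associative eadd.
Proof. by move=> f g h; apply: endS_ext => v /=; rewrite addrA. Qed.
Lemma eaddC : commutative eadd.
Proof. by move=> f g; apply: endS_ext => v /=; rewrite addrC. Qed.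
Lemma eadd0 : left_id e0 eadd.
Proof. by move=> f; apply: endS_ext => v /=; rewrite add0r. Qed.
Lemma eaddN : left_inverse e0 eopp eadd.
Proof. by move=> f; apply: endS_ext => v /=; rewrite addNr. Qed.

HB.instance Definition _ := GRing.isZmodule.Build (endS W) eaddA eaddC eadd0 eaddN.

Lemma ecompA : associative ecomp.
Proof. by move=> f g h; apply: endS_ext. Qed.
Lemma ecomp1 : left_id eid ecomp.
Proof. by move=> f; apply: endS_ext. Qed.
Lemma ecompr1 : right_id eid ecomp.
Proof. by move=> f; apply: endS_ext. Qed.
Lemma ecompDl : left_distributive ecomp +%R.
Proof. by move=> f g h; apply: endS_ext. Qed.
Lemma ecompDr : right_distributive ecomp +%R.
Proof. by move=> f g h; apply: endS_ext => v /=; rewrite efnD. Qed.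


Lemma eid_neq0 : eid != 0.
Proof.
apply/eqP => /(congr1 (fun f : endS W => efn f 1)) /= /eqP.
by rewrite oner_eq0.
Qed.

HB.instance Definition _ := GRing.Zmodule_isNzRing.Build (endS W)
  ecompA ecomp1 ecompr1 ecompDl ecompDr eid_neq0.

Lemma escaleA a b (f : endS W) : escale a (escale b f) = escale (a * b) f.
Proof. by apply: endS_ext => v /=; rewrite scalerA. Qed.
Lemma escale1 : left_id 1 escale.
Proof. by move=> f; apply: endS_ext => v /=; rewrite scale1r. Qed.
Lemma escaleDr : right_distributive escale +%R.
Proof. by move=> a f g; apply: endS_ext => v /=; rewrite scalerDr. Qed.
Lemma escaleDl (f : endS W) : {morph escale^~ f : a b / a + b}.
Proof. by move=> a b; apply: endS_ext => v /=; rewrite scalerDl. Qed.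

HB.instance Definition _ := GRing.Zmodule_isLmodule.Build F (endS W)
  escaleA escale1 escaleDr escaleDl.

Lemma escaleAl a (f g : endS W) : a *: (f * g) = (a *: f) * g.
Proof. by apply: endS_ext. Qed.
HB.instance Definition _ := GRing.Lmodule_isLalgebra.Build F (endS W) escaleAl.
Lemma escaleAr a (f g : endS W) : a *: (f * g) = f * (a *: g).
Proof. by apply: endS_ext => v /=; rewrite efnZ. Qed.
HB.instance Definition _ := GRing.Lalgebra_isAlgebra.Build F (endS W) escaleAr.

Lemma efnM (f g : endS W) v : (f * g) v = f (g v). Proof. by []. Qed.
Lemma efnB (f g : endS W) v : (f - g) v = f v - g v. Proof. by []. Qed.
Lemma efnX (f : endS W) n v : (f ^+ n) v = iter n f v.
Proof. by elim: n => [|n IH]; rewrite ?expr0 // exprS efnM IH. Qed.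

End EndS.

Section Gen.
Variables (F : fieldType) (A : algType F).

Program Definition topsp : subsp A := @Subsp F A (fun _ => True) _ _ _ _.

Program Definition lmul (W : subsp A) (a : A) (Ha : forall v, W v -> W (a * v)) : endS W :=
  @EndS F A W (fun v => a * v) _ Ha.
Next Obligation. by rewrite mulrDr scalerAr. Qed.

Definition lam (a : A) : endS topsp := @lmul topsp a (fun _ _ => I).

Lemma lam_mult : multiplicative lam.
Proof. by split=> [a b|]; apply: endS_ext => v //=; rewrite ?mulrA ?mul1r. Qed.
Lemma lam_lin : linear lam.
Proof. by move=> c a b; apply: endS_ext => v /=; rewrite mulrDl scalerAl. Qed.
HB.instance Definition _ := GRing.isLinear.Build F A (endS topsp) _ lam lam_lin.
HB.instance Definition _ := GRing.isMultiplicative.Build A (endS topsp) lam lam_mult.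

Program Definition incl (W : subsp A) (f : endS W) : endS topsp :=
  @EndS F A topsp (efn f) (@efnL F A W f) _.

Section G1.
Variable W : subsp A.
Variable psi : {lrmorphism A -> endS W}.
Definition ipsi (a : A) := incl (psi a).
Lemma ipsi_mult : multiplicative ipsi.
Proof. by split=> [a b|]; apply: endS_ext => v //=; rewrite ?rmorphM ?rmorph1. Qed.
Lemma ipsi_lin : linear ipsi.
Proof. by move=> c a b; apply: endS_ext => v /=; rewrite linearP. Qed.
HB.instance Definition _ := GRing.isLinear.Build F A (endS topsp) _ ipsi ipsi_lin.
HB.instance Definition _ := GRing.isMultiplicative.Build A (endS topsp) ipsi ipsi_mult.
End G1.

Lemma lmulX (W : subsp A) a Ha n v : efn (@lmul W a Ha ^+ n) v = a ^+ n * v.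
Proof.
rewrite efnX; elim: n => [|n IH]; first by rewrite expr0 mul1r.
by rewrite iterS IH /= exprS mulrA.
Qed.

Variables (N : nat) (x y : A).
Hypothesis HA : is_AN N x y.

Lemma gen (W : subsp A) : (forall v, W v -> W (x * v)) -> (forall v, W v -> W (y * v)) ->
  forall a, W a.
Proof.
move=> Wx Wy a.
have [Hr Hu] := HA.
have Hrel : AN_rel N (lmul Wx) (lmul Wy).
  apply: endS_ext => v; rewrite lmulX /=.
  by rewrite !mulrA -mulrBl Hr.

have [[psi [px py]] _] := Hu _ _ _ Hrel.
have [_ Hu1] := Hu _ _ _ Hr.
have Hrel2 : AN_rel N (lam x) (lam y).
  apply: endS_ext => v; rewrite lmulX /=.
  by rewrite !mulrA -mulrBl Hr.
have [_ Hu2] := Hu _ _ _ Hrel2.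
have E : forall b, lam b = ipsi psi b.
  have := Hu2 (lam : {lrmorphism A -> endS topsp}) (ipsi psi : {lrmorphism A -> endS topsp}).
  apply.
    by apply: endS_ext => v /=; rewrite px.
  by apply: endS_ext => v /=; rewrite py.
have := E a; move/(congr1 (fun f : endS topsp => efn f 1)) => /=; rewrite mulr1 => ->.
exact/efnW/sp1.
Qed.

End Gen.

Section R.
Variable F : fieldType.
Notation PP := {poly {poly F}}.

Definition shiftp (r : nat) (p : {poly F}) := p \Po ('X + r%:R%:P).

Definition mulR (U V : PP) : PP :=
  \poly_(m < size U + size V) \sum_(r < m.+1) shiftp r U`_(m - r) * V`_r.

Lemma coef_mulR U V m : (mulR U V)`_m = \sum_(r < m.+1) shiftp r U`_(m-r) * V`_r.
Proof.
rewrite coef_poly; case: ltnP => // Hm; apply/esym/big1 => r _.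
have [Hr|Hr] := ltnP r (size V); last by rewrite (nth_default _ Hr) mulr0.
rewrite nth_default ?mulr0.
  by rewrite /shiftp comp_poly0 mul0r.
have := ltn_ord r; move: Hm Hr; clear; move: (size U) (size V) (nat_of_ord r) => a b c; lia.
Qed.

Definition act n (U : PP) : 'M[F]_n :=
  \matrix_(i, j) if (j <= i)%N then (U`_(i - j)).[j%:R] else 0.

Lemma actM n U V : act n (mulR U V) = act n U *m act n V.
Proof.
apply/matrixP => i j; rewrite !mxE coef_mulR.
have [ji|ij] := leqP j i; last first.
  apply/esym/big1 => l _; rewrite !mxE.
  case: (leqP l i) => li; case: (leqP j l) => jl; rewrite ?mul0r ?mulr0 //.
  by move: (leq_trans jl li); rewrite leqNgt ij.
rewrite horner_sum.
pose f l := (if (l <= i)%N then (U`_(i - l)).[l%:R] else 0) *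
            (if (j <= l)%N then (V`_(l - j)).[j%:R] else 0).
rewrite (eq_bigr (fun l : 'I_n => f l)); last by move=> l _; rewrite !mxE.
rewrite -(big_mkord xpredT f).
have ilt : (i.+1 <= n)%N by [].
rewrite (@big_cat_nat _ _ _ j 0 n) /=; last 2 first. by []. by rewrite (leq_trans ji) // ltnW.
rewrite [X in _ = X + _]big1_seq ?add0r; last first.
  move=> l /andP [_]; rewrite mem_index_iota /f => /andP [_ lj].
  by rewrite (leqNgt j l) lj mulr0.
rewrite (@big_cat_nat _ _ _ i.+1 j n) /=; last 2 first. by rewrite ltnW. by [].
rewrite [X in _ = _ + X]big1_seq ?addr0; last first.
  move=> l /andP [_]; rewrite mem_index_iota /f => /andP [il _].
  by rewrite (leqNgt l i) il mul0r.
rewrite (big_addn 0 _ j) subSn // big_mkord.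
apply: eq_bigr => r _.
rewrite /f leq_addl -addnBA // subnn addn0.
have rji : (r + j <= i)%N.
  by rewrite addnC -leq_subRL // -ltnS.
rewrite rji.
rewrite hornerM /shiftp horner_comp !hornerE -natrD subnDA addnC. by rewrite subnAC.
Qed.

Lemma actD n U V : act n (U + V) = act n U + act n V.
Proof.
apply/matrixP => i j; rewrite !mxE coefD hornerD.
by case: ifP => //; rewrite addr0.
Qed.

Lemma actZ n (c : F) U : act n (c%:P *: U) = c *: act n U.
Proof.
apply/matrixP => i j; rewrite !mxE coefZ hornerM hornerC.
by case: ifP => //; rewrite mulr0.
Qed.

Lemma act1 n : act n 1 = 1.
Proof.
apply/matrixP => i j; rewrite !mxE coef1.
case: leqP => ji.
  rewrite subn_eq0; case: (leqP i j) => ij.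
    have -> : i = j by apply/val_inj/eqP; rewrite eqn_leq ij ji.
    by rewrite eqxx hornerC.
  by rewrite hornerC; case: eqP => // E; move: ij; rewrite E ltnn.
by case: eqP => // E; move: ji; rewrite E ltnn.
Qed.

Hypothesis char0 : [pchar F] =i pred0.

Lemma natrF_inj (a b : nat) : (a%:R = b%:R :> F) -> a = b.
Proof.
have H := iffLR (pcharf0P F) char0.
wlog ab : a b / (a <= b)%N.
  by move=> W E; case: (leqP a b) => ab; [apply: W | apply/esym/W; [apply: ltnW|]].
move=> /eqP; rewrite eq_sym -subr_eq0 -natrB // H subn_eq0 => ba.
by apply/eqP; rewrite eqn_leq ab ba.
Qed.

Lemma poly_nat0 (p : {poly F}) : (forall k : nat, p.[k%:R] = 0) -> p = 0.
Proof.
move=> H; apply/eqP; apply: contraT => p0.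
have := max_poly_roots p0 (rs := [seq k%:R | k <- iota 0 (size p)]).
rewrite size_map size_iota ltnn; apply.
  by apply/allP => z /mapP [k _ ->]; apply/rootP.
by rewrite map_inj_uniq ?iota_uniq // => a b; apply: natrF_inj.
Qed.

Lemma act_inj (U V : PP) : (forall n, act n.+1 U = act n.+1 V) -> U = V.
Proof.
move=> H; apply/polyP => s; apply/eqP; rewrite -subr_eq0; apply/eqP.
apply: poly_nat0 => k.
have := congr1 (fun M : 'M[F]_((k + s).+1) => M (inord (k + s)) (inord k)) (H (k + s)%N).
rewrite !mxE !inordK ?ltnS ?leq_addr // addKn => Ek.
by rewrite hornerD hornerN Ek subrr.
Qed.

Lemma actN n U : act n (- U) = - act n U.
Proof.
have -> : - U = (-1)%:P *: U by rewrite polyCN polyC1 scaleN1r.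
by rewrite actZ scaleN1r.
Qed.

Lemma actB n U V : act n (U - V) = act n U - act n V.
Proof. by rewrite actD actN. Qed.

End R.

Section R2.
Variable F : fieldType.
Notation PP := {poly {poly F}}.


Lemma shiftpD r (p q : {poly F}) : shiftp r (p + q) = shiftp r p + shiftp r q.
Proof. by rewrite /shiftp comp_polyD. Qed.
Lemma shiftpM r (p q : {poly F}) : shiftp r (p * q) = shiftp r p * shiftp r q.
Proof. by rewrite /shiftp comp_polyM. Qed.
Lemma shiftpC r (c : F) : shiftp r c%:P = c%:P.
Proof. by rewrite /shiftp comp_polyC. Qed.
Lemma shiftp0 r : shiftp r (0 : {poly F}) = 0.
Proof. by rewrite /shiftp comp_poly0. Qed.
Lemma shiftpn r n : shiftp r (n%:R : {poly F}) = n%:R.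
Proof. by rewrite -polyC_natr shiftpC. Qed.
Lemma size_XaddC (c : F) : size ('X + c%:P) = 2%N.
Proof. by rewrite size_XaddC. Qed.
Lemma size_shiftp r (p : {poly F}) : size (shiftp r p) = size p.
Proof. by rewrite /shiftp size_comp_poly2 // size_XaddC. Qed.
Lemma lead_shiftp r (p : {poly F}) : lead_coef (shiftp r p) = lead_coef p.
Proof.
rewrite /shiftp lead_coef_comp ?size_XaddC //.
by rewrite lead_coefXaddC expr1n mulr1.
Qed.
Lemma shiftp_eq0 r (p : {poly F}) : (shiftp r p == 0) = (p == 0).
Proof. by rewrite -!size_poly_eq0 size_shiftp. Qed.
Lemma shiftp_inv (r : nat) (p : {poly F}) : (shiftp r p) \Po ('X - r%:R%:P) = p.
Proof.
rewrite /shiftp -comp_polyA comp_polyD comp_polyX comp_polyC subrK.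
by rewrite comp_polyXr.
Qed.

Lemma coef_mulR_Xn (U : PP) b r m :
  (mulR U (b *: 'X^r))`_m = if (r <= m)%N then shiftp r U`_(m - r) * b else 0.
Proof.
rewrite coef_mulR; case: leqP => rm.
  have rm' : (r < m.+1)%N by [].
  rewrite (bigD1 (Ordinal rm')) //= coefZ coefXn eqxx mulr1 big1 ?addr0 //.
  move=> i /eqP ne; rewrite coefZ coefXn.
  case: eqP => e; last by rewrite mulr0 mulr0.
  by case: ne; apply: val_inj.
apply: big1 => i _; rewrite coefZ coefXn.
case: eqP => e; last by rewrite !mulr0.
by move: (ltn_ord i); rewrite e ltnS leqNgt rm.
Qed.

Lemma mulR_mono a b s r :
  mulR (a *: 'X^s) (b *: 'X^r) = (shiftp r a * b) *: ('X^(s + r) : PP).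
Proof.
apply/polyP => m; rewrite coef_mulR_Xn coefZ coefXn coefZ coefXn.
case: leqP => rm.
  have -> : (m - r == s)%N = (m == s + r)%N.
    by apply/eqP/eqP; move=> H; lia.
  by case: eqP; rewrite ?mulr1 ?mulr0 ?shiftp0 ?mul0r.
case: eqP => [e|_]; last by rewrite mulr0.
by move: rm; rewrite e ltnNge leq_addl.
Qed.

Lemma mulR_constl (p : {poly F}) (V : PP) : mulR (map_poly polyC p) V = map_poly polyC p * V.
Proof.
apply/polyP => m; rewrite coef_mulR coefMr; apply: eq_bigr => r _.
by rewrite coef_map /= shiftpC.
Qed.

Lemma mulRDl (U1 U2 V : PP) : mulR (U1 + U2) V = mulR U1 V + mulR U2 V.
Proof.
apply/polyP => m; rewrite coefD !coef_mulR -big_split /=.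
by apply: eq_bigr => r _; rewrite coefD shiftpD mulrDl.
Qed.

Lemma mulR0l (V : PP) : mulR 0 V = 0.
Proof.
apply/polyP => m; rewrite coef_mulR coef0 big1 // => r _.
by rewrite coef0 shiftp0 mul0r.
Qed.

Lemma coef_mulR_Cl (b : {poly F}) (U : PP) m : (mulR b%:P U)`_m = shiftp m b * U`_m.
Proof.
rewrite coef_mulR (bigD1 ord_max) //= subnn coefC eqxx big1 ?addr0 // => i ne.
rewrite coefC; case: eqP => e; last by rewrite shiftp0 mul0r.
case/eqP: ne; apply: val_inj => /=.
by move: (ltn_ord i) e; rewrite ltnS; lia.
Qed.

Lemma mulR_low (U V : PP) a b :
  (forall i, (i < a)%N -> U`_i = 0) -> (forall i, (i < b)%N -> V`_i = 0) ->
  (forall m, (m < a + b)%N -> (mulR U V)`_m = 0) /\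
  (mulR U V)`_(a + b) = shiftp b U`_a * V`_b.
Proof.
move=> HU HV; split.
  move=> m mab; rewrite coef_mulR big1 // => r _.
  case: (ltnP r b) => rb; first by rewrite HV // mulr0.
  by rewrite HU ?shiftp0 ?mul0r //; move: (ltn_ord r); lia.
have bab : (b < (a + b).+1)%N by rewrite ltnS leq_addl.
rewrite coef_mulR (bigD1 (Ordinal bab)) //= addnK big1 ?addr0 // => r ne.
case: (ltnP r b) => rb; first by rewrite HV // mulr0.
rewrite HU ?shiftp0 ?mul0r //.
have : (r : nat) != b by apply: contra ne => /eqP e; apply/eqP/val_inj.
move: (ltn_ord r) rb; lia.
Qed.

Lemma mulR_top (U V : PP) a b :
  (forall i, (a < i)%N -> U`_i = 0) -> (forall i, (b < i)%N -> V`_i = 0) ->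
  (forall m, (a + b < m)%N -> (mulR U V)`_m = 0) /\
  (mulR U V)`_(a + b) = shiftp b U`_a * V`_b.
Proof.
move=> HU HV; split.
  move=> m mab; rewrite coef_mulR big1 // => r _.
  case: (ltnP b r) => rb; first by rewrite HV // mulr0.
  by rewrite HU ?shiftp0 ?mul0r //; move: (ltn_ord r); lia.
have bab : (b < (a + b).+1)%N by rewrite ltnS leq_addl.
rewrite coef_mulR (bigD1 (Ordinal bab)) //= addnK big1 ?addr0 // => r ne.
case: (ltnP b r) => rb; first by rewrite HV // mulr0.
rewrite HU ?shiftp0 ?mul0r //.
have : (r : nat) != b by apply: contra ne => /eqP e; apply/eqP/val_inj.
move: (ltn_ord r) rb; lia.
Qed.

End R2.

Section R3.
Variable F : fieldType.
Notation PP := {poly {poly F}}.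
Hypothesis char0 : [pchar F] =i pred0.

Lemma top_unique (W : PP) p q :
  (forall m, (p < m)%N -> W`_m = 0) -> W`_p != 0 ->
  (forall m, (q < m)%N -> W`_m = 0) -> W`_q != 0 -> p = q.
Proof.
move=> Hp np Hq nq; case: (ltngtP p q) => // pq.
  by move: nq; rewrite Hp ?eqxx.
by move: np; rewrite Hq ?eqxx.
Qed.

Lemma low_unique (W : PP) p q :
  (forall m, (m < p)%N -> W`_m = 0) -> W`_p != 0 ->
  (forall m, (m < q)%N -> W`_m = 0) -> W`_q != 0 -> p = q.
Proof.
move=> Hp np Hq nq; case: (ltngtP p q) => // pq.
  by move: np; rewrite Hq ?eqxx.
by move: nq; rewrite Hp ?eqxx.
Qed.

Lemma above_size (U : PP) m : ((size U).-1 < m)%N -> U`_m = 0.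
Proof. by move=> H; rewrite nth_default //; move: H; case: (size U). Qed.

Lemma lead_neq0 (U : PP) : U != 0 -> U`_(size U).-1 != 0.
Proof. by move=> U0; rewrite -lead_coefE lead_coef_eq0. Qed.

Lemma shift_fixed (p : {poly F}) : shiftp 1 p = p -> p = (p.[0])%:P.
Proof.
move=> H; apply/eqP; rewrite -subr_eq0; apply/eqP; apply: (poly_nat0 char0) => k.
rewrite hornerD hornerN hornerC; apply/eqP; rewrite subr_eq0; apply/eqP.
elim: k => // k IH.
by rewrite -IH -{2}H /shiftp horner_comp !hornerE -natrD addn1.
Qed.

Lemma mulf_neq0' (p q : {poly F}) : p != 0 -> q != 0 -> p * q != 0.
Proof. exact: mulf_neq0. Qed.

Lemma step1 (U B : PP) : U != 0 -> mulR U 'X = mulR B U ->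
  forall m, U`_m = (U`_m).[0]%:P.
Proof.
move=> U0 E.
set a := (size U).-1.
have HUa := lead_neq0 U0.
have HU : forall i, (a < i)%N -> U`_i = 0 by move=> i; apply: above_size.
have EX : ('X : PP) = 1 *: 'X^1 by rewrite scale1r expr1.
have LHS m : (mulR U 'X)`_m = if (1 <= m)%N then shiftp 1 U`_(m - 1) else 0.
  by rewrite EX coef_mulR_Xn mulr1.
have B0 : B != 0.
  apply: contraNneq HUa => B0; move: (congr1 (fun W : PP => W`_(a.+1)) E).
  by rewrite B0 mulR0l coef0 LHS /= subn1 /= => /eqP; rewrite shiftp_eq0.
set b := (size B).-1.
have HBb := lead_neq0 B0.
have HB : forall i, (b < i)%N -> B`_i = 0 by move=> i; apply: above_size.
have [Rtop Rtopv] := mulR_top HB HU.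
rewrite -/b in Rtop Rtopv.
have ba : (b + a = a + 1)%N.
  apply: (@top_unique (mulR B U)).
  - by move=> m; apply: Rtop.
  - by rewrite Rtopv mulf_neq0 // shiftp_eq0.
  - move=> m am; rewrite -E LHS; case: ifP => // _.
    by rewrite HU ?shiftp0 //; lia.
  - by rewrite -E LHS addn1 /= subn1 /= shiftp_eq0.
have b1 : b = 1%N by lia.
rewrite b1 in HB HBb Rtopv.
have E1 : shiftp 1 U`_a = shiftp a B`_1 * U`_a.
  by rewrite -Rtopv addnC -E LHS addn1 /= subn1.
have HBb1 : B`_1 != 0 by rewrite -b1.
have HUa' : U`_a != 0 by [].
have sB1 : size B`_1 = 1%N.
  move: (congr1 (fun p : {poly F} => size p) E1) => /=; rewrite size_shiftp size_mul ?shiftp_eq0 //.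
  rewrite size_shiftp; move: HBb1 HUa'; rewrite -!size_poly_eq0.
  by case: (size B`_1) => // n; case: (size U`_a) => // k _ _; lia.
have [l El] : exists l, B`_1 = l%:P by exists (B`_1)`_0; apply: size1_polyC; rewrite sB1.
have l1 : l = 1.
  move: (congr1 lead_coef E1); rewrite lead_coefM El shiftpC lead_coefC lead_shiftp.
  move=> /eqP; rewrite -{1}[lead_coef _]mul1r eq_sym (inj_eq (mulIf _)) ?lead_coef_eq0 //.
  by move=> /eqP.
set b0 := B`_0.
have EB : B = b0%:P + 'X.
  apply/polyP => i; rewrite coefD coefC coefX.
  case: i => [|[|i]] //=; first by rewrite addr0.
    by rewrite El l1 add0r.
  by rewrite HB // addr0.
have E2 m : (mulR U 'X)`_m = shiftp m b0 * U`_m + (if m == 0%N then 0 else U`_m.-1).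
  have hX : ('X : PP) = map_poly polyC 'X by rewrite map_polyX.
  by rewrite E EB mulRDl coefD coef_mulR_Cl [X in mulR X]hX mulR_constl -hX coefXM.
have b00 : b0 = 0.
  apply/eqP; apply: contraNT U0 => b00; apply/eqP/polyP => m; rewrite coef0.
  elim: m => [|m IH].
    move: (E2 0%N); rewrite LHS /= addr0 => /esym/eqP.
    by rewrite mulf_eq0 shiftp_eq0 (negPf b00) => /eqP.
  move: (E2 m.+1); rewrite LHS /= subn1 /= IH shiftp0 addr0 => /esym/eqP.
  by rewrite mulf_eq0 shiftp_eq0 (negPf b00) => /eqP.
move=> m; apply: shift_fixed.
by move: (E2 m.+1); rewrite LHS /= b00 shiftp0 mul0r add0r subn1.
Qed.

Lemma step2 n1 (U B : PP) : U != 0 -> (forall m, U`_m = (U`_m).[0]%:P) ->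
  mulR U (('X : {poly F}) *: 'X^n1) = mulR B U ->
  exists (c : F) (i : nat), c != 0 /\ U = c%:P *: 'X^i.
Proof.
move=> U0 HUc E.
set a := (size U).-1.
have HUa : U`_a != 0 := lead_neq0 U0.
have HU : forall i, (a < i)%N -> U`_i = 0 by move=> i; apply: above_size.
have LHS m : (mulR U (('X : {poly F}) *: 'X^n1))`_m =
    if (n1 <= m)%N then U`_(m - n1) * 'X else 0.
  by rewrite coef_mulR_Xn HUc shiftpC -HUc.
have nX p : p != 0 -> p * 'X != 0 :> {poly F}.
  by move=> p0; rewrite mulf_neq0 // polyX_eq0.
have B0 : B != 0.
  apply: contraNneq HUa => B0; move: (congr1 (fun W : PP => W`_(a + n1)) E).
  rewrite B0 mulR0l coef0 LHS leq_addl addnK => /eqP.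
  by rewrite mulf_eq0 polyX_eq0 orbF.
set b := (size B).-1.
have HBb : B`_b != 0 := lead_neq0 B0.
have HB : forall i, (b < i)%N -> B`_i = 0 by move=> i; apply: above_size.
have [Rtop Rtopv] := mulR_top HB HU.
have ba : (b + a = a + n1)%N.
  apply: (@top_unique (mulR B U)).
  - by move=> m; apply: Rtop.
  - by rewrite Rtopv mulf_neq0 // shiftp_eq0.
  - move=> m am; rewrite -E LHS; case: ifP => // _.
    by rewrite HU ?mul0r //; lia.
  - by rewrite -E LHS leq_addl addnK nX.
have bn : b = n1 by lia.
have Etop : U`_a * 'X = shiftp a B`_b * U`_a.
  by rewrite -Rtopv ba -E LHS leq_addl addnK.
have SB : shiftp a B`_b = 'X.
  by apply: (mulIf HUa); rewrite -Etop mulrC.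
have EBb : B`_b = 'X - a%:R%:P.
  by rewrite -(shiftp_inv a B`_b) SB comp_polyX.
case: (@ex_minnP (fun m => U`_m != 0)); first by exists a.
move=> m0 Hm0 Hmin.
have Ulow : forall i, (i < m0)%N -> U`_i = 0.
  move=> i im0; apply/eqP; apply: contraTT im0 => H.
  by rewrite -leqNgt; apply: Hmin.
case: (@ex_minnP (fun m => B`_m != 0)); first by exists b.
move=> r0 Hr0 Hminr.
have Blow : forall i, (i < r0)%N -> B`_i = 0.
  move=> i ir0; apply/eqP; apply: contraTT ir0 => H.
  by rewrite -leqNgt; apply: Hminr.
have [Rlow Rlowv] := mulR_low Blow Ulow.
have rm : (r0 + m0 = m0 + n1)%N.
  apply: (@low_unique (mulR B U)).
  - by move=> m; apply: Rlow.
  - by rewrite Rlowv mulf_neq0 // shiftp_eq0.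
  - move=> m am; rewrite -E LHS; case: ifP => // H.
    by rewrite Ulow ?mul0r //; lia.
  - by rewrite -E LHS leq_addl addnK nX.
have r0b : r0 = b by lia.
have Elow : U`_m0 * 'X = shiftp m0 B`_b * U`_m0.
  by rewrite -r0b -Rlowv rm -E LHS leq_addl addnK.
have SB2 : shiftp m0 B`_b = 'X.
  by apply: (mulIf Hm0); rewrite -Elow mulrC.
have m0a : m0 = a.
  move: SB2; rewrite EBb /shiftp comp_polyB comp_polyX comp_polyC.
  move=> /(congr1 (fun p : {poly F} => p`_0)).
  rewrite coefB coefD coefX coefC coefC /= add0r => /eqP.
  by rewrite subr_eq0 => /eqP /(natrF_inj char0).
exists (U`_a).[0], a; split.
  by apply: contra HUa => /eqP c0; rewrite HUc c0.
apply/polyP => i; rewrite coefZ coefXn.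
case: (ltngtP i a) => ia.
- by rewrite mulr0 Ulow // m0a.
- by rewrite mulr0 HU.
- by rewrite ia mulr1 -HUc.
Qed.

End R3.

Section Span.
Variables (F : fieldType) (A : algType F) (N : nat) (x y : A).
Hypothesis Hr : AN_rel N x y.

Notation hx := (horner_alg x).
Definition Dp (p : {poly F}) : {poly F} := 'X^N * p^`().

Lemma yx : y * x = x * y + x ^+ N.
Proof. by rewrite -Hr addrC subrK. Qed.

Lemma hx_commX p n : hx p * x ^+ n = x ^+ n * hx p.
Proof.
have E : x ^+ n = hx 'X^n by rewrite rmorphXn /= horner_algX.
by rewrite E -!rmorphM mulrC.
Qed.

Lemma comm_y_hx p : y * hx p = hx p * y + hx (Dp p).
Proof.
rewrite /Dp; elim/poly_ind: p => [|p c IH].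
  by rewrite deriv0 mulr0 !rmorph0 mulr0 mul0r addr0.
rewrite derivMXaddC !rmorphD !rmorphM /= horner_algC rmorphXn /= !horner_algX.
move: IH; rewrite rmorphM rmorphXn /= horner_algX => IH.
rewrite mulrDr mulrA IH mulrDl -mulrA yx mulrDr.
have -> : y * c%:A = c%:A * y by rewrite -scalerAr -scalerAl mulr1 mul1r.
rewrite rmorphD rmorphM /= horner_algX mulrDl mulrDr !mulrA hx_commX.
by rewrite -!addrA; congr (_ + _); rewrite addrA addrC.
Qed.

Definition E (C : {poly {poly F}}) := \sum_(j < size C) hx C`_j * y ^+ j.

Lemma E_wide n (C : {poly {poly F}}) : (size C <= n)%N -> E C = \sum_(j < n) hx C`_j * y ^+ j.
Proof.
move=> le; rewrite /E (big_ord_widen n (fun j => hx C`_j * y ^+ j)) // big_mkcond.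
apply: eq_bigr => i _; case: ltnP => // H.
by rewrite nth_default // rmorph0 mul0r.
Qed.

Lemma E0 : E 0 = 0.
Proof. by rewrite /E size_poly0 big_ord0. Qed.

Lemma E1 : E 1 = 1.
Proof. by rewrite /E size_poly1 big_ord1 coef1 /= rmorph1 mulr1. Qed.

Lemma ED (C D : {poly {poly F}}) : E (C + D) = E C + E D.
Proof.
set n := maxn (size C) (size D).
rewrite (@E_wide n (C + D)); last by rewrite (leq_trans (size_polyD _ _)).
rewrite (@E_wide n C) ?leq_maxl // (@E_wide n D) ?leq_maxr // -big_split /=.
by apply: eq_bigr => i _; rewrite coefD rmorphD mulrDl.
Qed.

Lemma EZ c (C : {poly {poly F}}) : E (c%:P *: C) = c *: E C.
Proof.
rewrite (@E_wide (size C)) ?size_scale_leq // /E scaler_sumr.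
apply: eq_bigr => i _; rewrite coefZ rmorphM /= horner_algC.
by rewrite -scalerAl mul1r scalerAl.
Qed.

Lemma EX (C : {poly {poly F}}) : x * E C = E ('X *: C).
Proof.
rewrite (@E_wide (size C) ('X *: C)) ?size_scale_leq // /E mulr_sumr.
apply: eq_bigr => i _; rewrite coefZ rmorphM /= horner_algX.
by rewrite mulrA.
Qed.

Lemma EY (C : {poly {poly F}}) : y * E C = E (C * 'X) + E (\poly_(j < size C) Dp C`_j).
Proof.
rewrite (@E_wide (size C) (\poly_(j < size C) _)) ?size_poly //.
rewrite (@E_wide (size C).+1 (C * 'X)); last first.
  by rewrite (leq_trans (size_mul_leq _ _)) // size_polyX addnS addn1.
rewrite big_ord_recl coefMX eqxx rmorph0 mul0r add0r.
rewrite /E mulr_sumr -big_split /=.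
apply: eq_bigr => i _; rewrite coefMX coef_poly ltn_ord /= mulrA comm_y_hx.
by rewrite mulrDl -mulrA -exprS.
Qed.

End Span.


Section Span2.
Variables (F : fieldType) (A : algType F) (N : nat) (x y : A).
Hypothesis HA : is_AN N x y.

Program Definition spanW : subsp A := @Subsp F A (fun a => exists C, a = E x y C) _ _ _ _.
Next Obligation. by exists 0; rewrite E0. Qed.
Next Obligation. by exists 1; rewrite E1. Qed.
Next Obligation. by exists (H + H0); rewrite ED. Qed.
Next Obligation. by exists (c%:P *: H); rewrite EZ. Qed.

Lemma spanning a : exists C, a = E x y C.
Proof.
apply: (@gen F A N x y HA spanW).
  by move=> v [C ->]; exists ('X *: C); rewrite EX.
move=> v [C ->]; exists (C * 'X + \poly_(j < size C) Dp N C`_j).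
by rewrite ED -EY //; case: HA.
Qed.

End Span2.

Section Rep.
Variables (F : fieldType) (N : nat) (A : algType F) (x y : A).
Hypothesis char0 : [pchar F] =i pred0.
Hypothesis HN : (1 <= N)%N.
Hypothesis HA : is_AN N x y.
Notation PP := {poly {poly F}}.

Definition Tm : PP := (1 : {poly F}) *: 'X^1.
Definition Ym : PP := ('X : {poly F}) *: 'X^(N.-1).

Lemma relM n : AN_rel N (act n.+1 Tm) (act n.+1 Ym).
Proof.
rewrite /AN_rel -!mulmxE -!actM -actB /Tm /Ym !mulR_mono.
have -> : forall k, act n.+1 ((1 : {poly F}) *: 'X^1) ^+ k = act n.+1 ((1 : {poly F}) *: 'X^k).
  elim=> [|k IH]; first by rewrite expr0 scale1r act1.
  by rewrite exprSr IH -mulmxE -actM mulR_mono shiftpC mulr1 addn1.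
rewrite shiftpC mulr1 mul1r addn1 add1n prednK // -scalerBl.
by congr (act _ (_ *: _)); rewrite /shiftp comp_polyX addrAC subrr add0r.
Qed.

Definition rep (a : A) (U : PP) := forall n (f : {lrmorphism A -> 'M[F]_n.+1}),
  f x = act n.+1 Tm -> f y = act n.+1 Ym -> f a = act n.+1 U.

Lemma rep_ex n : exists f : {lrmorphism A -> 'M[F]_n.+1},
  f x = act n.+1 Tm /\ f y = act n.+1 Ym.
Proof. by have [H _] := HA.2 _ _ _ (relM n). Qed.

Lemma rep_uniq a U V : rep a U -> rep a V -> U = V.
Proof.
move=> HU HV; apply: (act_inj char0) => n.
have [f [fx fy]] := rep_ex n.
by rewrite -(HU n f fx fy) -(HV n f fx fy).
Qed.

Lemma repx : rep x Tm. Proof. by move=> n f fx fy. Qed.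
Lemma repy : rep y Ym. Proof. by move=> n f fx fy. Qed.
Lemma rep0 : rep 0 0.
Proof.
move=> n f _ _; rewrite raddf0; apply/matrixP => i j.
by rewrite !mxE coef0 horner0; case: ifP.
Qed.
Lemma rep1 : rep 1 1. Proof. by move=> n f _ _; rewrite rmorph1 act1. Qed.
Lemma repD a b U V : rep a U -> rep b V -> rep (a + b) (U + V).
Proof. by move=> HU HV n f fx fy; rewrite raddfD actD; congr (_ + _); [exact: HU | exact: HV]. Qed.
Lemma repB a b U V : rep a U -> rep b V -> rep (a - b) (U - V).
Proof. by move=> HU HV n f fx fy; rewrite raddfB actB; congr (_ - _); [exact: HU | exact: HV]. Qed.
Lemma repZ c a U : rep a U -> rep (c *: a) (c%:P *: U).
Proof. by move=> HU n f fx fy; rewrite linearZ actZ; congr (_ *: _); exact: HU. Qed.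
Lemma repM a b U V : rep a U -> rep b V -> rep (a * b) (mulR U V).
Proof.
by move=> HU HV n f fx fy; rewrite rmorphM actM mulmxE; congr (_ * _); [exact: HU | exact: HV].
Qed.

Lemma rep_hx p : rep (horner_alg x p) (map_poly polyC p).
Proof.
elim/poly_ind: p => [|p c IH].
  by rewrite rmorph0 map_poly0; apply: rep0.
rewrite rmorphD rmorphM /= horner_algX horner_algC rmorphD rmorphM /= map_polyX map_polyC /=.
apply: repD.
  have -> : map_poly polyC p * 'X = mulR (map_poly polyC p) Tm.
    by rewrite mulR_constl /Tm scale1r expr1.
  exact: repM IH repx.
by rewrite -alg_polyC; apply: repZ rep1.
Qed.

Fixpoint Pj j : {poly F} := if j is j'.+1 then shiftp N.-1 (Pj j') * 'X else 1.

Lemma Pj_size j : size (Pj j) = j.+1 /\ lead_coef (Pj j) = 1.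
Proof.
elim: j => [|j [IHs IHl]] /=; first by rewrite size_poly1 lead_coef1.
have P0 : shiftp N.-1 (Pj j) != 0 by rewrite shiftp_eq0 -size_poly_eq0 IHs.
by rewrite size_mulX // lead_coefMX lead_shiftp size_shiftp IHs.
Qed.

Lemma rep_y j : rep (y ^+ j) (Pj j *: 'X^(j * N.-1)).
Proof.
elim: j => [|j IH]; first by rewrite expr0 /= mul0n scale1r expr0; apply: rep1.
rewrite exprSr.
have -> : Pj j.+1 *: ('X^(j.+1 * N.-1) : PP) = mulR (Pj j *: 'X^(j * N.-1)) Ym.
  by rewrite /Ym mulR_mono mulSn addnC.
exact: repM IH repy.
Qed.

Definition Psi (C : PP) : PP :=
  \sum_(j < size C) map_poly polyC C`_j * (Pj j *: 'X^(j * N.-1)).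

Lemma rep_E C : rep (E x y C) (Psi C).
Proof.
rewrite /E /Psi; elim/big_rec2: _ => [|j a U _ HU]; first exact: rep0.
apply: repD => //.
rewrite -mulR_constl; exact: repM (rep_hx _) (rep_y _).
Qed.

Lemma Psi_inj C : Psi C = 0 -> C = 0.
Proof.
move=> E0; apply/eqP; apply: contraT => C0.
have HC := lead_neq0 C0.
move: HC; set J := (size C).-1 => HC.
have sC : size C = J.+1 by rewrite /J prednK // size_poly_gt0.
have key : forall s, (C`_J * 'X^(J * N.-1))`_s = 0.
  move=> s; move: (congr1 (fun W : PP => (W`_s)`_J) E0).
  rewrite coef0 coef0 /Psi coef_sum coef_sum.
  rewrite (eq_bigr (fun j : 'I_(size C) => (Pj j)`_J * (C`_j * 'X^(j * N.-1))`_s)); last first.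
    move=> j _; rewrite -scalerAr coefZ !coefMXn.
    case: ltnP => _; first by rewrite mulr0 coef0 mulr0.
    by rewrite coef_map /= coefMC.
  rewrite sC big_ord_recr /= big1 ?add0r.
    have [sJ lJ] := Pj_size J.
    have cJ : (Pj J)`_J = 1 by rewrite -lJ lead_coefE sJ.
    by rewrite cJ mul1r => /esym.
  move=> j _; have [Hs _] := Pj_size j.
  by rewrite nth_default ?mul0r // Hs ltn_ord.
case/negP: HC; apply/eqP.
have : C`_J * 'X^(J * N.-1) = 0 by apply/polyP => s; rewrite key coef0.
by move/eqP; rewrite mulf_eq0 expf_eq0 polyX_eq0 andbF orbF => /eqP.
Qed.
End Rep.

Section Main.
Variables (F : fieldType) (N : nat) (A : algType F) (x y : A).
Hypothesis char0 : [pchar F] =i pred0.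
Hypothesis HN : (1 <= N)%N.
Hypothesis HA : is_AN N x y.
Notation PP := {poly {poly F}}.

Lemma rep_all a : exists U, rep N x y a U.
Proof. have [C ->] := spanning HA a; exists (Psi N C); exact: rep_E. Qed.

Lemma rep_zero a : rep N x y a 0 -> a = 0.
Proof.
have [C ->] := spanning HA a => H.
have := rep_uniq char0 HN HA (@rep_E F N A x y C) H.
by move/Psi_inj => ->; rewrite E0.
Qed.

Lemma rep_inj a b U : rep N x y a U -> rep N x y b U -> a = b.
Proof.
move=> Ha Hb; apply/eqP; rewrite -subr_eq0; apply/eqP; apply: rep_zero.
by rewrite -(subrr U); apply: repB.
Qed.

Lemma xy_comm1 : x * y = (y - x ^+ N.-1) * x.
Proof.
by rewrite mulrBl -exprSr prednK // (yx HA.1) addrK.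
Qed.
Lemma xy_comm2 : y * x = x * (y + x ^+ N.-1).
Proof.
by rewrite mulrDr -exprS prednK // (yx HA.1).
Qed.

Program Definition W1 : subsp A := @Subsp F A (fun a => exists b, x * a = b * x) _ _ _ _.
Next Obligation. by exists 0; rewrite mulr0 mul0r. Qed.
Next Obligation. by exists 1; rewrite mulr1 mul1r. Qed.
Next Obligation. by exists (H + H0); rewrite mulrDr mulrDl H2 H1. Qed.
Next Obligation. by exists (c *: H); rewrite -scalerAr -scalerAl H0. Qed.

Program Definition W2 : subsp A := @Subsp F A (fun a => exists b, a * x = x * b) _ _ _ _.
Next Obligation. by exists 0; rewrite mulr0 mul0r. Qed.
Next Obligation. by exists 1; rewrite mulr1 mul1r. Qed.
Next Obligation. by exists (H + H0); rewrite mulrDr mulrDl H2 H1. Qed.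
Next Obligation. by exists (c *: H); rewrite -scalerAr -scalerAl H0. Qed.

Lemma normal_x : normal_elt x.
Proof.
split.
  apply: (@gen F A N x y HA W1).
    by move=> v [b Hb]; exists (x * b); rewrite Hb mulrA.
  by move=> v [b Hb]; exists ((y - x ^+ N.-1) * b); rewrite mulrA xy_comm1 -mulrA Hb mulrA.
apply: (@gen F A N x y HA W2).
  by move=> v [b Hb]; exists (x * b); rewrite -mulrA Hb.
by move=> v [b Hb]; exists ((y + x ^+ N.-1) * b); rewrite -mulrA Hb mulrA xy_comm2 mulrA.
Qed.

Lemma normalM (u v : A) : normal_elt u -> normal_elt v -> normal_elt (u * v).
Proof.
move=> [Hu1 Hu2] [Hv1 Hv2]; split=> a.
  have [b Hb] := Hv1 a; have [c Hc] := Hu1 b.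
  by exists c; rewrite -mulrA Hb mulrA Hc mulrA.
have [b Hb] := Hu2 a; have [c Hc] := Hv2 b.
by exists c; rewrite mulrA Hb -mulrA Hc mulrA.
Qed.

Lemma normal1 : normal_elt (1 : A).
Proof. by split=> a; exists a; rewrite mulr1 mul1r. Qed.

Lemma normalZ (c : F) (u : A) : normal_elt u -> normal_elt (c *: u).
Proof.
move=> [H1 H2]; split=> a.
  by have [b Hb] := H1 a; exists b; rewrite -scalerAl Hb scalerAr.
by have [b Hb] := H2 a; exists b; rewrite -scalerAr Hb scalerAl.
Qed.

Lemma rep_xi (c : F) i : rep N x y (c *: x ^+ i) (c%:P *: 'X^i).
Proof.
apply: repZ.
have := @rep_hx F N A x y ('X^i); rewrite rmorphXn /= horner_algX map_polyXn.
by [].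
Qed.

Theorem main (u : A) :
    (u != 0 /\ normal_elt u) <->
    (exists (lam : F) (i : nat), lam != 0 /\ u = lam *: x ^+ i).
Proof.
split.
  move=> [u0 [Hn1 Hn2]].
  have [U HU] := rep_all u.
  have U0 : U != 0.
    by apply: contra u0 => /eqP U0; rewrite U0 in HU; apply/eqP/rep_zero.
  have [b Hb] := Hn1 x; have [B HB] := rep_all b.
  have E1 : mulR U 'X = mulR B U.
    have -> : ('X : PP) = Tm F by rewrite /Tm scale1r expr1.
    apply: (rep_uniq char0 HN HA (repM (HU) (@repx F N A x y))).
    by rewrite Hb; apply: repM.
  have HUc := step1 char0 U0 E1.
  have [b' Hb'] := Hn1 y; have [B' HB'] := rep_all b'.
  have E2 : mulR U (('X : {poly F}) *: 'X^(N.-1)) = mulR B' U.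
    apply: (rep_uniq char0 HN HA (repM (HU) (@repy F N A x y))).
    by rewrite Hb'; apply: repM.
  have [c [i [c0 EU]]] := step2 char0 U0 HUc E2.
  exists c, i; split => //.
  by apply: (rep_inj HU); rewrite EU; apply: rep_xi.
move=> [lam [i [l0 ->]]]; split.
  apply/eqP => E0; have := rep_xi lam i; rewrite E0 => H.
  have := rep_uniq char0 HN HA H (@rep0 F N A x y) => /(congr1 (fun W : PP => W`_i)).
  rewrite coefZ coefXn eqxx mulr1 coef0 => /eqP; rewrite polyC_eq0.
  by apply/negP.
apply: normalZ; elim: i => [|i IH]; first by rewrite expr0; apply: normal1.
by rewrite exprS; apply: normalM => //; apply: normal_x.
Qed.

End Main.


Theorem lemma2p1 (F : fieldType) (N : nat) (A : algType F) (x y : A) :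
  [pchar F] =i pred0 -> (1 <= N)%N -> is_AN N x y ->
  forall u : A,
    (u != 0 /\ normal_elt u) <->
    (exists (lam : F) (i : nat), lam != 0 /\ u = lam *: x ^+ i).
Proof.
move=> char0 HN HA u.
exact: (main char0 HN HA u).
Qed.
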